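(* Let $d\ge1$. Let $G_A=(V_A,E_A)$ with configuration $\mathbf{p}^A$ and $G_B=(V_B,E_B)$ with configuration $\mathbf{p}^B$ be frameworks in general position in $\mathbb{R}^d$, with $V_C=V_A\cap V_B$ a proper subset of both $V_A$ and $V_B$, $|V_C|\ge d+1$, and $\mathbf{p}^A_i=\mathbf{p}^B_i$ for $i\in V_C$. Let $\Omega_A$, $\Omega_B$ be positive semidefinite stress matrices of nullity $d+1$ of $G_A(\mathbf{p}^A)$, $G_B(\mathbf{p}^B)$, and assume moreover that $G_A(\mathbf{p}^A)$ is infinitesimally rigid. Let $F=\{\{i_k,j_k\}:k=1,\dots,K\}$ be the set of edges of $E_B\setminus E_A$ with both endpoints in $V_C$. Then there is a real symmetric $V_A\times V_A$ matrix $\Omega_{AK}$ which is a stress matrix of the framework with graph $(V_A,E_A\cup F)$ and configuration $\mathbf{p}^A$ and satisfies $(\Omega_{AK})_{i_kj_k}=-(\Omega_B)_{i_kj_k}$ for $k=1,\dots,K$ (its entries are obtained from the rigidity matrix of $G_A(\mathbf{p}^A)$ and the entries of $\Omega_B$ by solving $K$ systems of linear equations); and for a large enough constant $c>0$, the matrix $$\widetilde\Omega_{re}=c\,\widetilde\Omega_A+\widetilde\Omega_{AK}+\widetilde\Omega_B$$ is a positive semidefinite stress matrix of nullity $d+1$ of the edge-reduced framework attachment, i.e. of the framework with graph $(V_A\cup V_B,(E_A\cup E_B)\setminus F)$ and configuration $\mathbf{p}$ where $\mathbf{p}_i=\mathbf{p}^A_i$ ($i\in V_A$), $\mathbf{p}_i=\mathbf{p}^B_i$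 ($i\in V_B$). Here $\widetilde X$ denotes the extension by zeros of a matrix $X$ indexed by $V_A$ or $V_B$ to a matrix indexed by $V_A\cup V_B$.
   Context: A framework $G(\mathbf{p})$ in $\mathbb{R}^d$ is a finite graph $G=(V,E)$ with points $\mathbf{p}_i\in\mathbb{R}^d$; general position means any $d+1$ distinct vertices have affinely independent points. A stress matrix of $G(\mathbf{p})$ is a real $|V|\times|V|$ matrix $\Omega$ with: $\Omega_{ij}=\Omega_{ji}$; $\Omega_{ij}=0$ whenever $i\ne j$ and $\{i,j\}\notin E$; $\sum_j\Omega_{ij}=0$ and $\sum_j\Omega_{ij}\mathbf{p}_j=0$ for all $i$. Nullity means $\dim\ker$. The rigidity matrix $df$ of $G(\mathbf{p})$ is the $|E|\times |V|d$ matrix whose row for edge $\{i,j\}$ has $\mathbf{p}_i-\mathbf{p}_j$ in the $d$ columns of vertex $i$, $\mathbf{p}_j-\mathbf{p}_i$ in the columns of vertex $j$, and zeros elsewhere; $G(\mathbf{p})$ is infinitesimally rigid if $\operatorname{rank}(df)=|V|d-\binom{d+1}{2}$. *)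

(* Defs.v *)
From HB Require Import structures.
From mathcomp Require Import all_boot all_order all_algebra.
From mathcomp Require Import reals.

Set Implicit Arguments.
Unset Strict Implicit.
Unset Printing Implicit Defensive.

Import Order.TTheory GRing.Theory Num.Theory.
Local Open Scope ring_scope.

Section Frameworks.
Variables (R : realType) (T : finType) (d : nat).

(* A matrix "indexed by" a finite vertex set S : {set T} is a
   'M_#|S| matrix whose index a : 'I_#|S| stands for vertex [vtx a]. *)
Definition vtx (S : {set T}) (a : 'I_#|S|) : T := enum_val a.

(* entry (i,j) (i, j vertices) of a matrix indexed by S; 0 if i or j not in S *)
Definition entry (S : {set T}) (X : 'M[R]_#|S|) (i j : T) : R :=
  \sum_(a < #|S|) \sum_(b < #|S|)
     (if (vtx a == i) && (vtx b == j) then X a b else 0).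

Definition ext (S U : {set T}) (X : 'M[R]_#|S|) : 'M[R]_#|U| :=
  \matrix_(a < #|U|, b < #|U|) entry X (vtx a) (vtx b).

Definition is_graph (S : {set T}) (E : {set {set T}}) : Prop :=
  forall e, e \in E -> (e \subset S) /\ #|e| = 2%N.

Definition aff_indep (q : 'I_d.+1 -> 'rV[R]_d) : Prop :=
  row_free (\matrix_(k < d.+1) row_mx (q k) (1 : 'rV[R]_1)).

Definition general_position (S : {set T}) (p : T -> 'rV[R]_d) : Prop :=
  forall f : 'I_d.+1 -> T, injective f -> (forall k, f k \in S) ->
    aff_indep (fun k => p (f k)).

Definition is_stress (S : {set T}) (E : {set {set T}}) (p : T -> 'rV[R]_d)
    (Om : 'M[R]_#|S|) : Prop :=
  [/\ Om^T = Om,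
      (forall a b : 'I_#|S|, a != b -> [set vtx a; vtx b] \notin E -> Om a b = 0),
      (forall a, \sum_(b < #|S|) Om a b = 0) &
      (forall a, \sum_(b < #|S|) Om a b *: p (vtx b) = 0)].

Definition psd n (M : 'M[R]_n) : Prop :=
  forall v : 'rV[R]_n, 0 <= (v *m M *m v^T) 0 0.

Definition nullity n (M : 'M[R]_n) : nat := \rank (kermx M).

(* rigidity matrix: row for edge e={i,j} has p_i - p_j in the d columns of
   vertex i, p_j - p_i in those of j, zeros elsewhere *)
Definition rigidity_matrix (S : {set T}) (E : {set {set T}}) (p : T -> 'rV[R]_d)
  : 'M[R]_(#|E|, #|S| * d) :=
  \matrix_(r < #|E|)
    mxvec (\matrix_(a < #|S|, k < d)
      (if vtx a \in (enum_val r : {set T})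
       then \sum_(u in (enum_val r : {set T}) :\ vtx a) (p (vtx a) - p u) 0 k
       else 0)).

Definition inf_rigid (S : {set T}) (E : {set {set T}}) (p : T -> 'rV[R]_d) : Prop :=
  \rank (rigidity_matrix S E p) = (#|S| * d - 'C(d.+1, 2))%N.

End Frameworks.

Arguments is_stress {R T d} S E p Om.

(* Main.v *)
Require Import Defs.
From HB Require Import structures.
From mathcomp Require Import all_boot all_order all_algebra.
From mathcomp Require Import reals.
From mathcomp Require Import ring lra zify.
Import Order.TTheory GRing.Theory Num.Theory.
Local Open Scope ring_scope.
Set Implicit Arguments. Unset Strict Implicit. Unset Printing Implicit Defensive.

Lemma vtx_inj (T : finType) (S : {set T}) : injective (@vtx T S).
Proof. exact: enum_val_inj. Qed.

Lemma vtx_in (T : finType) (S : {set T}) a : @vtx T S a \in S.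
Proof. exact: enum_valP. Qed.

Lemma vtx_surj (T : finType) (S : {set T}) x : x \in S -> exists a, @vtx T S a = x.
Proof. move=> hx; exists (enum_rank_in hx x); exact: enum_rankK_in. Qed.

Lemma sum_vtx (R : realType) (T : finType) (S : {set T}) (g : 'I_#|S| -> R) a0 :
  \sum_(a < #|S|) (if @vtx T S a == vtx a0 then g a else 0) = g a0.
Proof.
rewrite (bigD1 a0) //= eqxx big1 ?addr0 // => a ha.
by case: eqP => // /vtx_inj e; rewrite e eqxx in ha.
Qed.

Lemma sum_vtx0 (R : realType) (T : finType) (S : {set T}) (g : 'I_#|S| -> R) x :
  x \notin S -> \sum_(a < #|S|) (if @vtx T S a == x then g a else 0) = 0.
Proof.
move=> hx; apply: big1 => a _; case: eqP => // e.
by move: (vtx_in a); rewrite e (negbTE hx).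
Qed.

Lemma entry_vtx (R : realType) (T : finType) (S : {set T}) (X : 'M[R]_#|S|) a b :
  entry X (vtx a) (vtx b) = X a b.
Proof.
rewrite /entry -(sum_vtx (fun a' => X a' b) a); apply: eq_bigr => a' _.
case: eqP => _ /=; last by rewrite big1.
by rewrite -(sum_vtx (fun b' => X a' b') b).
Qed.

Lemma entry_out (R : realType) (T : finType) (S : {set T}) (X : 'M[R]_#|S|) i j :
  (i \notin S) || (j \notin S) -> entry X i j = 0.
Proof.
move=> h; rewrite /entry; apply: big1 => a _; apply: big1 => b _.
case: eqP => [ea|] //=; case: eqP => [eb|] //= ; move: h.
by rewrite -ea -eb !vtx_in.
Qed.

Lemma quad_disc (R : realType) (a b c : R) : 0 <= a ->
  (forall t, 0 <= c + 2 * t * b + t ^+ 2 * a) -> b ^+ 2 <= c * a.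
Proof.
move=> a0 h.
have c0 : 0 <= c by have := h 0; rewrite expr0n /= mulr0 !mul0r !addr0.
have [a00|ap] := eqVneq a 0.
  rewrite a00 mulr0; case: (b =P 0) => [->|/eqP bn0]; first by rewrite expr0n.
  have := h (- (c + 1) / (2 * b)); rewrite a00 mulr0 addr0.
  have -> : 2 * (- (c + 1) / (2 * b)) * b = - (c + 1) by field.
  lra.
have apos : 0 < a by rewrite lt_def ap a0.
have := h (- (b / a)).
have e : b = (b / a) * a by field.
move: (b / a) e => x ->. nra.
Qed.

Lemma qf_sym (R : realType) n (A : 'M[R]_n) (u v : 'rV[R]_n) : A^T = A ->
  (v *m A *m u^T) 0 0 = (u *m A *m v^T) 0 0.
Proof.
move=> hA; rewrite -[in LHS](trmxK (v *m A *m u^T)) mxE.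
by rewrite !trmx_mul trmxK hA mulmxA.
Qed.

Lemma qf_sym' (R : realType) n (A : 'M[R]_n) (u v : 'rV[R]_n) : A^T = A ->
  v *m A *m u^T = u *m A *m v^T.
Proof.
move=> hA; rewrite [LHS]mx11_scalar [RHS]mx11_scalar qf_sym //.
Qed.

Lemma psd_cs (R : realType) n (A : 'M[R]_n) : A^T = A -> psd A ->
  forall u v : 'rV_n, ((u *m A *m v^T) 0 0) ^+ 2 <=
     (u *m A *m u^T) 0 0 * (v *m A *m v^T) 0 0.
Proof.
move=> hA hp u v; apply: quad_disc; first exact: hp.
move=> t; have := hp (u + t *: v).
rewrite linearD /= linearZ /= !mulmxDl !mulmxDr.
rewrite -!scalemxAl -!scalemxAr (qf_sym' u v hA).
set x := u *m A *m u^T; set y := u *m A *m v^T; set z := v *m A *m v^T.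
rewrite !mxE.
move=> H; apply: le_trans H _; rewrite le_eqVlt; apply/orP; left; apply/eqP; ring.
Qed.

Lemma qf_delta (R : realType) n (M : 'M[R]_(1, n)) j :
  (M *m (delta_mx (0 : 'I_1) j : 'rV[R]_n)^T) 0 0 = M 0 j.
Proof. by rewrite trmx_delta -colE mxE. Qed.

Lemma psd_diag (R : realType) n (A : 'M[R]_n) j :
  ((delta_mx (0 : 'I_1) j : 'rV[R]_n) *m A *m (delta_mx (0 : 'I_1) j : 'rV[R]_n)^T) 0 0 = A j j.
Proof. by rewrite qf_delta -rowE mxE. Qed.

Lemma psd0 (R : realType) n (A : 'M[R]_n) (u : 'rV[R]_n) : A^T = A -> psd A ->
  (u *m A *m u^T) 0 0 = 0 -> u *m A = 0.
Proof.
move=> hA hp h0; apply/rowP => j; rewrite [RHS]mxE.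
have := psd_cs hA hp u (delta_mx 0 j); rewrite h0 mul0r qf_delta.
by move=> H; apply/eqP; rewrite -sqrf_eq0 eq_le H sqr_ge0.
Qed.

Lemma kerT_sub (R : realType) m p N (B : 'M[R]_(m, N)) (C : 'M[R]_(p, N)) :
  (kermx B^T <= kermx C^T)%MS -> (C <= B)%MS.
Proof.
move=> hk.
set Kb := kermx B^T.
have hC : (C <= kermx Kb^T)%MS.
  apply/sub_kermxP; move/sub_kermxP: hk => hk.
  by rewrite -[C]trmxK -trmx_mul hk trmx0.
have hB : (B <= kermx Kb^T)%MS.
  apply/sub_kermxP; by rewrite -[B]trmxK -trmx_mul mulmx_ker trmx0.
apply: submx_trans hC _.
rewrite -(mxrank_leqif_sup hB).2.
rewrite mxrank_ker mxrank_tr /Kb mxrank_ker mxrank_tr subKn //.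
exact: rank_leq_col.
Qed.

Lemma sq_le_sum (R : realType) n (z : 'rV[R]_n) i :
  z 0 i ^+ 2 <= (z *m z^T) 0 0.
Proof.
rewrite mxE (bigD1 i) //= mxE -expr2 lerDl.
by apply: sumr_ge0 => k _; rewrite mxE -expr2 sqr_ge0.
Qed.

Lemma bound_W (R : realType) n (W : 'M[R]_n) (z : 'rV[R]_n) :
  - (\sum_i \sum_j `|W i j|) * (z *m z^T) 0 0 <= (z *m W *m z^T) 0 0.
Proof.
set s := (z *m z^T) 0 0.
have e : (z *m W *m z^T) 0 0 = \sum_i \sum_j z 0 i * W i j * z 0 j.
  rewrite mxE; under eq_bigr do rewrite mxE big_distrl /=.
  rewrite exchange_big; apply: eq_bigr => i _; apply: eq_bigr => j _.
  by rewrite mxE.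
rewrite e mulNr big_distrl /= -sumrN; apply: ler_sum => i _.
rewrite big_distrl /= -sumrN; apply: ler_sum => j _.
have hi := sq_le_sum z i; have hj := sq_le_sum z j.
have hw := ler_norm (W i j); have hwn := normr_ge0 (W i j).
have hw2 : - W i j <= `|W i j| by rewrite -normrN ler_norm.
move: (z 0 i) (z 0 j) (W i j) (`|W i j|) hi hj hw hw2 hwn => a b w k hi hj hw hw2 hk.
have h1 : 0 <= (k + w) * (a + b) ^+ 2 by apply: mulr_ge0; [lra | exact: sqr_ge0].
have h2 : 0 <= (k - w) * (a - b) ^+ 2 by apply: mulr_ge0; [lra | exact: sqr_ge0].
have h3 : k * a ^+ 2 <= k * s by apply: ler_wpM2l.
have h4 : k * b ^+ 2 <= k * s by apply: ler_wpM2l.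
nra.
Qed.

Lemma tr_bound (R : realType) n (A : 'M[R]_n) (v : 'rV[R]_n) : A^T = A -> psd A ->
  ((v *m A) *m (v *m A)^T) 0 0 <= \tr A * (v *m A *m v^T) 0 0.
Proof.
move=> hA hp; set z := v *m A; set q := (z *m v^T) 0 0.
rewrite [X in X <= _]mxE /mxtrace mulr_suml; apply: ler_sum => j _.
rewrite [z^T _ _]mxE -expr2 -(qf_delta z j) mulrC /q /z.
by rewrite -(psd_diag A j); apply: psd_cs.
Qed.

Lemma psd_pert (R : realType) n (A M : 'M[R]_n) : A^T = A -> M^T = M -> psd A ->
  (kermx A <= kermx M)%MS ->
  exists c1 : R, 0 <= c1 /\ forall c, c1 <= c -> psd (c *: A + M).
Proof.
move=> hA hM hp hk.
have sMA : (M <= A)%MS by apply: kerT_sub; rewrite hA hM.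
case/submxP: sMA => D hD.
set G := pinvmx A.
have hAGA : A *m G *m A = A by apply: mulmxKpV; exact: submx_refl.
have hM2 : M = A *m (D^T *m G) *m A.
  have e1 : M = M *m G *m A by rewrite hD -(mulmxA D A G) -(mulmxA D) hAGA.
  by rewrite e1 -{1}hM hD trmx_mul hA !mulmxA.
move: (D^T *m G) hM2 => W hM2.
set K : R := \sum_i \sum_j `|W i j|.
have hK : 0 <= K by apply: sumr_ge0 => i _; apply: sumr_ge0 => j _.
have ht : 0 <= \tr A.
  by apply: sumr_ge0 => j _; rewrite -(psd_diag A j); apply: hp.
exists (K * \tr A); split; first exact: mulr_ge0.
move=> c hc v.
rewrite mulmxDr mulmxDl mxE -!scalemxAr -scalemxAl mxE.
rewrite hM2 !mulmxA.
have hb := bound_W W (v *m A); rewrite -/K in hb.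
have htb := tr_bound v hA hp.
have hq := hp v.
have -> : v *m A *m W *m A *m v^T = v *m A *m W *m (v *m A)^T.
  by rewrite trmx_mul hA !mulmxA.
move: hb htb hq hc hK ht.
move: ((v *m A *m W *m (v *m A)^T) 0 0) ((v *m A *m (v *m A)^T) 0 0) ((v *m A *m v^T) 0 0) (\tr A) K c.
move=> x y q t k c' hb htb hq hc hk' ht'.
have : k * y <= k * (t * q) by apply: ler_wpM2l.
have : (k * t) * q <= c' * q by apply: ler_wpM2r.
nra.
Qed.


Definition Sel (R : realType) (T : finType) (U : {set T}) m (g : 'I_m -> T) : 'M[R]_(m, #|U|) :=
  \matrix_(k, a) (if g k == @vtx T U a then 1 else 0).

Definition Jm (R : realType) (T : finType) (S U : {set T}) : 'M[R]_(#|S|, #|U|) :=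
  Sel R U (@vtx T S).

Lemma ext_J (R : realType) (T : finType) (S U : {set T}) (X : 'M[R]_#|S|) :
  ext U X = (Jm R S U)^T *m X *m Jm R S U.
Proof.
apply/matrixP => a b; rewrite !mxE /entry.
under [RHS]eq_bigr do rewrite !mxE big_distrl /=.
rewrite exchange_big; apply: eq_bigr => a' _; apply: eq_bigr => b' _.
rewrite !mxE; case: eqP; case: eqP => /= *; by rewrite ?mul0r ?mulr0 ?mul1r ?mulr1.
Qed.

Lemma Sel_row (R : realType) (T : finType) (U : {set T}) m (g : 'I_m -> T) q
  (Y : 'M[R]_(#|U|, q)) k b : vtx b = g k -> row k (Sel R U g *m Y) = row b Y.
Proof.
move=> hb; rewrite row_mul mulmx_sum_row (bigD1 b) //= !mxE hb eqxx scale1r.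
rewrite big1 ?addr0 // => a ha; rewrite !mxE; case: eqP => [e|]; last by rewrite scale0r.
by move: ha; rewrite -hb in e; rewrite (vtx_inj e) eqxx.
Qed.

Lemma Sel_rowT (R : realType) (T : finType) (U : {set T}) m (g : 'I_m -> T)
  (u : 'rV[R]_#|U|) k b : vtx b = g k -> (u *m (Sel R U g)^T) 0 k = u 0 b.
Proof.
move=> hb.
have e : u *m (Sel R U g)^T = (Sel R U g *m u^T)^T by rewrite trmx_mul trmxK.
have h := congr1 (fun M : 'M[R]_(1,1) => M 0 0) (Sel_row u^T hb).
rewrite e [LHS]mxE; move: h => /=; rewrite !mxE => ->; by rewrite ?mxE.
Qed.

Definition Zm (R : realType) (T : finType) d (S : {set T}) (p : T -> 'rV[R]_d)
  : 'M[R]_(#|S|, d + 1) :=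
  row_mx (\matrix_(a, k) p (vtx a) 0 k) (const_mx 1).

Lemma row_Zm (R : realType) (T : finType) d (S : {set T}) (p : T -> 'rV[R]_d) a :
  row a (Zm S p) = row_mx (p (vtx a)) (1 : 'rV[R]_1).
Proof.
rewrite /Zm row_row_mx; congr row_mx; apply/rowP => k; rewrite !mxE //.
by rewrite ord1.
Qed.

Lemma stress_Z (R : realType) (T : finType) d (S : {set T}) (p : T -> 'rV[R]_d)
   (Om : 'M[R]_#|S|) :
  (forall a, \sum_(b < #|S|) Om a b = 0) ->
  (forall a, \sum_(b < #|S|) Om a b *: p (vtx b) = 0) -> Om *m Zm S p = 0.
Proof.
move=> h1 h2; rewrite /Zm mul_mx_row; apply/eqP; rewrite row_mx_eq0; apply/andP; split.
  apply/eqP/matrixP => a k; rewrite !mxE.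
  transitivity ((\sum_(b < #|S|) Om a b *: p (vtx b)) 0 k); last by rewrite h2 mxE.
  by rewrite summxE; apply: eq_bigr => b _; rewrite !mxE.
apply/eqP/matrixP => a k; rewrite !mxE; transitivity (\sum_(b < #|S|) Om a b); last exact: h1.
by apply: eq_bigr => b _; rewrite !mxE mulr1.
Qed.

Lemma Z_stress (R : realType) (T : finType) d (S : {set T}) (p : T -> 'rV[R]_d)
   (Om : 'M[R]_#|S|) : Om *m Zm S p = 0 ->
  (forall a, \sum_(b < #|S|) Om a b = 0) /\
  (forall a, \sum_(b < #|S|) Om a b *: p (vtx b) = 0).
Proof.
rewrite /Zm mul_mx_row => /eqP; rewrite row_mx_eq0 => /andP[/eqP h2 /eqP h1]; split.
  move=> a; transitivity ((Om *m const_mx 1 : 'M[R]_(#|S|,1)) a 0); last by rewrite h1 mxE.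
  by rewrite mxE; apply: eq_bigr => b _; rewrite !mxE mulr1.
move=> a; apply/rowP => k.
transitivity ((Om *m \matrix_(a, k) p (vtx a) 0 k : 'M[R]_(#|S|,d)) a k); last by rewrite h2 !mxE.
rewrite summxE mxE; apply: eq_bigr => b _; by rewrite !mxE.
Qed.

Lemma Sel_Zm (R : realType) (T : finType) d (S : {set T}) (p : T -> 'rV[R]_d)
  m (f : 'I_m -> T) : (forall k, f k \in S) ->
  Sel R S f *m Zm S p = \matrix_(k < m) row_mx (p (f k)) (1 : 'rV[R]_1).
Proof.
move=> hf; apply/row_matrixP => k; rewrite rowK.
have [b hb] := vtx_surj (hf k).
by rewrite (Sel_row _ hb) row_Zm hb.
Qed.

Lemma JZ (R : realType) (T : finType) d (S U : {set T}) (p p' : T -> 'rV[R]_d) :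
  S \subset U -> (forall x, x \in S -> p' x = p x) ->
  Jm R S U *m Zm U p' = Zm S p.
Proof.
move=> sSU hp; apply/row_matrixP => a.
have [b hb] := vtx_surj (subsetP sSU _ (vtx_in a)).
by rewrite /Jm (Sel_row _ hb) !row_Zm hb hp // vtx_in.
Qed.

Lemma rank_Zm (R : realType) (T : finType) d (S : {set T}) (p : T -> 'rV[R]_d)
  (f : 'I_d.+1 -> T) : injective f -> (forall k, f k \in S) ->
  general_position S p -> \rank (Zm S p) = d.+1.
Proof.
move=> fi fS gp; apply/eqP; rewrite eqn_leq; apply/andP; split.
  by apply: leq_trans (rank_leq_col (Zm S p)) _; rewrite addn1.
have := gp f fi fS; rewrite /aff_indep /row_free => /eqP <-.
by rewrite -(Sel_Zm p fS) mxrankM_maxr.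
Qed.

Lemma Q_full (R : realType) d (q : 'I_d.+1 -> 'rV[R]_d) : aff_indep q ->
  row_full (\matrix_(k < d.+1) row_mx (q k) (1 : 'rV[R]_1)).
Proof. by rewrite /aff_indep /row_free /row_full => /eqP ->; rewrite addn1. Qed.

Lemma ker_Z (R : realType) (T : finType) d (S : {set T}) (p : T -> 'rV[R]_d)
  (Om : 'M[R]_#|S|) : Om^T = Om -> Om *m Zm S p = 0 ->
  nullity Om = d.+1 -> \rank (Zm S p) = d.+1 -> (kermx Om <= (Zm S p)^T)%MS.
Proof.
move=> hs hz hn hr.
have sZ : ((Zm S p)^T <= kermx Om)%MS.
  by apply/sub_kermxP; rewrite -hs -trmx_mul hz trmx0.
rewrite -(mxrank_leqif_sup sZ).2 mxrank_tr hr.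
by rewrite /nullity in hn; rewrite hn.
Qed.


Lemma mxvec_dot (R : realType) m n (A B : 'M[R]_(m, n)) :
  (mxvec A *m (mxvec B)^T) 0 0 = \tr (A *m B^T).
Proof.
rewrite mxE (reindex _ (curry_mxvec_bij _ _)) /=.
have -> : \tr (A *m B^T) = \sum_i \sum_j A i j * B i j.
  by apply: eq_bigr => i _; rewrite mxE; apply: eq_bigr => j _; rewrite mxE.
rewrite pair_bigA /=; apply: eq_bigr => [[i j]] _ /=.
by rewrite mxE !mxvecE.
Qed.

Definition Pm (R : realType) (T : finType) d (S : {set T}) (p : T -> 'rV[R]_d)
  : 'M[R]_(#|S|, d) := \matrix_(a, k) p (vtx a) 0 k.

Definition Mot (R : realType) (T : finType) d (S : {set T}) (p : T -> 'rV[R]_d)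
  (X : 'M[R]_d) (be : 'rV[R]_d) : 'rV[R]_(#|S| * d) :=
  mxvec (Pm S p *m X + const_mx 1 *m be).

Lemma mot_orth (R : realType) (T : finType) d (S : {set T}) (p : T -> 'rV[R]_d)
  (X : 'M[R]_d) (be : 'rV[R]_d) (N : 'M[R]_#|S|) :
  N^T = N -> N *m (const_mx 1 : 'M[R]_(#|S|,1)) = 0 -> X^T = - X ->
  Mot S p X be *m (mxvec (N *m Pm S p))^T = 0.
Proof.
move=> hN h1 hX; apply/rowP => i; rewrite ord1 [RHS]mxE mxvec_dot.
rewrite trmx_mul hN mulmxDl mxtraceD.
set P := Pm S p.
have -> : \tr (const_mx 1 *m be *m (P^T *m N)) = 0.
  by rewrite -mulmxA mxtrace_mulC -!mulmxA h1 !mulmx0 mxtrace0.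
rewrite addr0 -mulmxA mxtrace_mulC !mulmxA.
pose Y := P^T *m N *m P.
have -> : X *m P^T *m N *m P = X *m Y by rewrite /Y !mulmxA.
rewrite mxtrace_mulC.
have hY : Y^T = Y by rewrite /Y !trmx_mul trmxK hN mulmxA.
have e : \tr (Y *m X) = - \tr (Y *m X).
  by rewrite -[LHS]mxtrace_tr trmx_mul hX hY mulNmx raddfN /= mxtrace_mulC.
have : 2 * \tr (Y *m X) = 0 by rewrite mulr2n mulrDl mul1r {1}e addNr.
by move/eqP; rewrite mulf_eq0 pnatr_eq0 /= => /eqP.
Qed.

Definition Se (R : realType) (T : finType) (S : {set T}) (e : {set T}) : 'M[R]_#|S| :=
  \matrix_(a, b) (if (@vtx T S a \in e) && (@vtx T S b \in e) then
                    (if a == b then 1 else -1) else 0).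

Lemma two_set (T : finType) (S e : {set T}) x : #|e| = 2%N -> e \subset S -> x \in e ->
  exists z, [/\ z \in S, z != x & e = [set x; z]].
Proof.
move=> /eqP/cards2P [u [v [uv ->]]] sS.
have uS : u \in S by apply: (subsetP sS); rewrite !inE eqxx.
have vS : v \in S by apply: (subsetP sS); rewrite !inE eqxx orbT.
rewrite !inE => /orP [/eqP ->|/eqP ->].
  by exists v; split => //; rewrite eq_sym.
by exists u; split => //; rewrite setUC.
Qed.

Lemma pair_eq (T : finType) (e : {set T}) x y : #|e| = 2%N -> x != y -> x \in e -> y \in e ->
  e = [set x; y].
Proof.
move=> he xy xe ye; have [z [_ zx ez]] := two_set he (subxx e) xe.
move: ye; rewrite ez !inE => /orP [/eqP yx|/eqP -> //].
by rewrite yx eqxx in xy.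
Qed.

Lemma Se_sum (R : realType) (T : finType) (S : {set T}) a bz (g : 'I_#|S| -> R) :
  a != bz -> \sum_b Se R S [set vtx a; vtx bz] a b * g b = g a - g bz.
Proof.
move=> abz; rewrite (bigD1 a) //= (bigD1 bz) 1?eq_sym //= !mxE !inE !eqxx /=.
rewrite orbT (negbTE abz) big1 ?addr0; first by rewrite mul1r mulN1r.
move=> b /andP [ba bbz]; rewrite mxE !inE eqxx /=.
case: eqP => [/vtx_inj e|]; first by rewrite e eqxx in ba.
case: eqP => [/vtx_inj e|]; first by rewrite e eqxx in bbz.
by rewrite mul0r.
Qed.

Lemma Se_sum0 (R : realType) (T : finType) (S : {set T}) (e : {set T}) (a : 'I_#|S|) (g : 'I_#|S| -> R) :
  vtx a \notin e -> \sum_b Se R S e a b * g b = 0.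
Proof. by move=> h; apply: big1 => b _; rewrite mxE (negbTE h) mul0r. Qed.

Lemma Se_sym (R : realType) (T : finType) (S : {set T}) (e : {set T}) : (Se R S e)^T = Se R S e.
Proof. by apply/matrixP => a b; rewrite !mxE andbC eq_sym. Qed.

Lemma Se_one (R : realType) (T : finType) (S : {set T}) (e : {set T}) : e \subset S -> #|e| = 2%N ->
  Se R S e *m (const_mx 1 : 'M[R]_(#|S|, 1)) = 0.
Proof.
move=> sS he; apply/matrixP => a k; rewrite !mxE.
case: (boolP (vtx a \in e)) => ha; last first.
  by rewrite (Se_sum0 (fun b => (const_mx 1 : 'M[R]_(#|S|, 1)) b k)).
have [z [zS za ez]] := two_set he sS ha.
have [bz hbz] := vtx_surj zS.
have abz : a != bz by apply: contraNneq za => ->; rewrite hbz.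
rewrite ez -hbz (Se_sum (fun b => (const_mx 1 : 'M[R]_(#|S|, 1)) b k) abz).
by rewrite !mxE subrr.
Qed.

Lemma rig_row (R : realType) (T : finType) d (S : {set T}) (E : {set {set T}})
  (p : T -> 'rV[R]_d) r : (enum_val r : {set T}) \subset S -> #|(enum_val r : {set T})| = 2%N ->
  row r (rigidity_matrix S E p) = mxvec (Se R S (enum_val r) *m Pm S p).
Proof.
move=> sS he; rewrite rowK; congr mxvec; apply/matrixP => a k; rewrite !mxE.
set e := (enum_val r : {set T}) in sS he *.
case: (boolP (vtx a \in e)) => ha; last first.
  by rewrite (Se_sum0 (fun b => Pm S p b k)).
have [z [zS za ez]] := two_set he sS ha.
have [bz hbz] := vtx_surj zS.
have abz : a != bz by apply: contraNneq za => ->; rewrite hbz.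
rewrite ez -hbz (Se_sum (fun b => Pm S p b k) abz) !mxE.
have -> : [set vtx a; vtx bz] :\ vtx a = [set vtx bz].
  apply/setP => x; rewrite !inE; case: eqP => // ->.
  by rewrite /= hbz eq_sym (negbTE za).
by rewrite big_set1 !mxE.
Qed.


Definition D2 d := [set A : {set 'I_d} | #|A| == 2%N].

Definition Xr (R : realType) d (A : {set 'I_d}) : 'M[R]_d :=
  \matrix_(k, l) (if (k \in A) && (l \in A) then
     (if (k < l)%N then 1 else if (l < k)%N then -1 else 0) else 0).

Lemma Xr_skew (R : realType) d (A : {set 'I_d}) : (Xr R A)^T = - Xr R A.
Proof.
apply/matrixP => k l; rewrite !mxE andbC.
case: (_ && _); last by rewrite oppr0.
by case: ltngtP => _; rewrite ?opprK ?oppr0.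
Qed.

Definition Tm (R : realType) (T : finType) d (S : {set T}) (p : T -> 'rV[R]_d)
  : 'M[R]_(#|D2 d| + d, #|S| * d) :=
  col_mx (\matrix_(j < #|D2 d|) Mot S p (Xr R (enum_val j)) 0)
         (\matrix_(k < d) Mot S p 0 (delta_mx 0 k)).

Lemma Tm_orth (R : realType) (T : finType) d (S : {set T}) (p : T -> 'rV[R]_d)
  (N : 'M[R]_#|S|) :
  N^T = N -> N *m (const_mx 1 : 'M[R]_(#|S|,1)) = 0 ->
  Tm S p *m (mxvec (N *m Pm S p))^T = 0.
Proof.
move=> hN h1; rewrite /Tm mul_col_mx; apply/eqP; rewrite col_mx_eq0; apply/andP; split;
  apply/eqP/row_matrixP => i; rewrite row_mul rowK row0.
  by apply: mot_orth => //; apply: Xr_skew.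
by apply: mot_orth => //; rewrite trmx0 oppr0.
Qed.

Lemma card_D2 d : #|D2 d| = 'C(d, 2).
Proof. by rewrite /D2 card_draws card_ord. Qed.

Lemma Tm_free (R : realType) (T : finType) d (S : {set T}) (p : T -> 'rV[R]_d)
  (f : 'I_d.+1 -> T) : injective f -> (forall k, f k \in S) ->
  general_position S p -> row_free (Tm S p).
Proof.
move=> fi fS gp.
rewrite -kermx_eq0; apply/rowV0P => w /sub_kermxP hw.
rewrite -[w]hsubmxK in hw *.
move: (lsubmx w) (rsubmx w) hw => al be hw.
set X := \sum_j al 0 j *: Xr R (enum_val j).
have e1 : al *m (\matrix_(j < #|D2 d|) Mot S p (Xr R (enum_val j)) 0) = mxvec (Pm S p *m X).
  rewrite mulmx_sum_row /X mulmx_sumr linear_sum; apply: eq_bigr => j _.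
  by rewrite rowK /Mot mulmx0 addr0 -scalemxAr linearZ.
have e2 : be *m (\matrix_(k < d) Mot S p 0 (delta_mx 0 k)) = mxvec (const_mx 1 *m be).
  rewrite mulmx_sum_row {2}(row_sum_delta be) mulmx_sumr linear_sum; apply: eq_bigr => k _.
  by rewrite rowK /Mot mulmx0 add0r -scalemxAr linearZ.
rewrite /Tm mul_row_col e1 e2 -linearD /= in hw.
have hz : Pm S p *m X + const_mx 1 *m be = 0 by apply/eqP; rewrite -mxvec_eq0 hw.
have hZ : Zm S p *m col_mx X be = 0 by rewrite /Zm mul_row_col; exact: hz.
have hQ : (\matrix_(k < d.+1) row_mx (p (f k)) (1 : 'rV[R]_1)) *m col_mx X be = 0.
  by rewrite -(Sel_Zm p fS) -mulmxA hZ mulmx0.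
have [Q' hQ'] := row_fullP (Q_full (gp f fi fS)).
have : col_mx X be = 0 by rewrite -[col_mx X be]mul1mx -hQ' -mulmxA hQ mulmx0.
move/eqP; rewrite col_mx_eq0 => /andP [/eqP hX /eqP hb].
have hal : al = 0.
  apply/rowP => j; rewrite mxE.
  have : enum_val j \in D2 d := enum_valP j.
  rewrite /D2 inE => /cards2P [u [v [uv huv]]].
  wlog ul : u v uv huv / (u < v)%N.
    move=> H; case: (ltngtP u v) => [h|h|h]; first exact: H h.
      by apply: (H v u); rewrite 1?eq_sym // huv setUC.
    by move: uv; rewrite (val_inj h) eqxx.
  have := congr1 (fun M : 'M[R]_d => M u v) hX; rewrite /X summxE mxE.
  rewrite (bigD1 j) //= mxE /Xr mxE huv !inE !eqxx orbT ul mulr1 big1 ?addr0 // => j' hj'.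
  rewrite !mxE; case: ifP; last by rewrite mulr0.
  move=> /andP [hu hv]; exfalso; move: hj' => /negP; apply.
  apply/eqP/enum_val_inj; rewrite huv.
  have : enum_val j' \in D2 d := enum_valP j'.
  by rewrite /D2 inE => /eqP h2; apply: pair_eq.
by rewrite hal hb row_mx0.
Qed.




Lemma resolve (R : realType) (T : finType) d (S : {set T}) (E : {set {set T}})
  (p : T -> 'rV[R]_d) (f : 'I_d.+1 -> T) (N : 'M[R]_#|S|) :
  inf_rigid S E p -> is_graph S E -> injective f -> (forall k, f k \in S) ->
  general_position S p -> N^T = N -> N *m (const_mx 1 : 'M[R]_(#|S|,1)) = 0 ->
  exists w : 'rV[R]_#|E|, mxvec (N *m Pm S p) = w *m rigidity_matrix S E p.
Proof.
move=> hr hg fi fS gp hN h1.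
set Rg := rigidity_matrix S E p.
have hRow r : row r Rg = mxvec (Se R S (enum_val r) *m Pm S p).
  by have [sS c2] := hg _ (enum_valP r); apply: rig_row.
have hTR : Tm S p *m Rg^T = 0.
  apply: trmx_inj; rewrite trmx_mul trmxK trmx0.
  apply/row_matrixP => r; rewrite row_mul hRow row0.
  have [sS c2] := hg _ (enum_valP r).
  by rewrite -[LHS]trmxK trmx_mul trmxK Tm_orth ?trmx0 ?Se_sym ?Se_one.
have sTK : (Tm S p <= kermx Rg^T)%MS by apply/sub_kermxP.
have hS : (d.+1 <= #|S|)%N.
  have <- : #|[set f k | k in [set: 'I_d.+1]]| = d.+1 by rewrite card_imset // cardsT card_ord.
  by apply: subset_leq_card; apply/subsetP => x /imsetP [k _ ->].
have hC : ('C(d.+1, 2) <= #|S| * d)%N.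
  rewrite bin2 /=; apply: leq_trans (_ : (d.+1 * d <= #|S| * d)%N); last exact: leq_mul.
  by rewrite leq_half_double; lia.
have rT : \rank (Tm S p) = 'C(d.+1, 2).
  by rewrite (eqP (Tm_free fi fS gp)) card_D2 binS bin1.
have rK : \rank (kermx Rg^T) = 'C(d.+1, 2).
  by rewrite mxrank_ker mxrank_tr hr subKn.
have sKT : (kermx Rg^T <= Tm S p)%MS by rewrite -(mxrank_leqif_sup sTK).2 rT rK.
have sL : (mxvec (N *m Pm S p) <= Rg)%MS.
  apply: kerT_sub; apply: submx_trans sKT _; apply/sub_kermxP.
  exact: Tm_orth.
by case/submxP: sL => D hD; exists D.
Qed.


Lemma entry_sym (R : realType) (T : finType) (S : {set T}) (X : 'M[R]_#|S|) i j :
  X^T = X -> entry X i j = entry X j i.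
Proof.
move=> hX; rewrite /entry exchange_big; apply: eq_bigr => b _; apply: eq_bigr => a _.
by rewrite andbC -{1}hX mxE.
Qed.

Lemma Se_off (R : realType) (T : finType) (S : {set T}) (E : {set {set T}}) (e : {set T}) a b :
  e \in E -> #|e| = 2%N -> a != b -> [set vtx a; vtx b] \notin E -> Se R S e a b = 0.
Proof.
move=> eE ce ab hn; rewrite mxE; case: ifP => // /andP [ha hb].
have vab : vtx a != vtx b by apply: contra ab => /eqP /vtx_inj ->.
by move: hn; rewrite -(pair_eq ce vab ha hb) eE.
Qed.

Lemma exists_OmAK (R : realType) (T : finType) d (VA VB : {set T})
  (EA EB : {set {set T}}) (pA : T -> 'rV[R]_d) (OmB : 'M[R]_#|VB|)
  (f : 'I_d.+1 -> T) :
  inf_rigid VA EA pA -> is_graph VA EA -> is_graph VB EB -> injective f ->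
  (forall k, f k \in VA) -> general_position VA pA -> OmB^T = OmB ->
  let F := [set e in EB :\: EA | e \subset VA :&: VB] in
  exists OmAK : 'M[R]_#|VA|,
    [/\ OmAK^T = OmAK,
        is_stress VA (EA :|: F) pA OmAK &
        (forall i j, [set i; j] \in F -> i != j ->
           entry OmAK i j = - entry OmB i j)].
Proof.
move=> hr gA gB fi fS gp hB F.
pose Nf : 'M[R]_#|VA| := \matrix_(a, b)
  (if [set vtx a; vtx b] \in F then - entry OmB (vtx a) (vtx b) else 0).
pose N : 'M[R]_#|VA| := Nf - \matrix_(a, b) ((a == b)%:R * \sum_b' Nf a b').
have hNf : Nf^T = Nf.
  apply/matrixP => a b; rewrite !mxE setUC (entry_sym _ _ hB) //.
have NfE a b : Nf a b = (if [set vtx a; vtx b] \in F then - entry OmB (vtx a) (vtx b) else 0).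
  by rewrite mxE.
clearbody Nf.
have hN : N^T = N.
  rewrite /N linearB /= hNf; congr (_ - _); apply/matrixP => a b; rewrite !mxE.
  by case: eqP => [->|]; rewrite ?eqxx // eq_sym => /eqP /negbTE ->; rewrite !mul0r.
have hN1 : N *m (const_mx 1 : 'M[R]_(#|VA|,1)) = 0.
  apply/matrixP => a k; rewrite !mxE.
  under eq_bigr do rewrite !mxE mulr1.
  rewrite sumrB [X in _ - X](bigD1 a) //= eqxx mul1r [X in _ - (_ + X)]big1 ?addr0 ?subrr // => b hb.
  by rewrite eq_sym (negbTE hb) mul0r.
have hNoff a b : a != b -> N a b = Nf a b.
  by move=> ab; rewrite !mxE (negbTE ab) mul0r subr0.
clearbody N.
have [w hw] := resolve hr gA fi fS gp hN hN1.
pose Y : 'M[R]_#|VA| := \sum_r w 0 r *: Se R VA (enum_val r).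
have hYP : N *m Pm VA pA = Y *m Pm VA pA.
  apply: (can_inj mxvecK); rewrite hw mulmx_sum_row /Y mulmx_suml linear_sum.
  apply: eq_bigr => r _; rewrite -scalemxAl linearZ /=; congr (_ *: _).
  by have [sS c2] := gA _ (enum_valP r); apply: rig_row.
have hY : Y^T = Y.
  by rewrite /Y linear_sum; apply: eq_bigr => r _; rewrite linearZ /= Se_sym.
have hY1 : Y *m (const_mx 1 : 'M[R]_(#|VA|,1)) = 0.
  rewrite /Y mulmx_suml big1 // => r _.
  by have [sS c2] := gA _ (enum_valP r); rewrite -scalemxAl Se_one // scaler0.
have hYoff a b : a != b -> [set vtx a; vtx b] \notin EA -> Y a b = 0.
  move=> ab hn; rewrite /Y summxE big1 // => r _; rewrite mxE.
  have [sS c2] := gA _ (enum_valP r).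
  by rewrite (@Se_off R T VA EA) ?mulr0 // enum_valP.
clearbody Y.
have hz : (N - Y) *m Zm VA pA = 0.
  rewrite /Zm mul_mx_row !mulmxBl hN1 hY1 subrr.
  have -> : N *m \matrix_(a, k) pA (vtx a) 0 k = Y *m \matrix_(a, k) pA (vtx a) 0 k by exact: hYP.
  by rewrite subrr row_mx0.
have [hs1 hs2] := Z_stress hz.
exists (N - Y); split.
- by rewrite linearB /= hN hY.
- split => //.
  + by rewrite linearB /= hN hY.
  + move=> a b ab; rewrite inE negb_or => /andP [nA nF].
    by rewrite !mxE hNoff // NfE (negbTE nF) hYoff // oppr0 addr0.
- move=> i j hF ij.
  have hF' := hF; rewrite inE in hF'; move/andP: hF' => [] /[swap] /subsetP sC.
  rewrite !inE => /andP [nA _].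
  have [a ha] := vtx_surj (setIP (sC i (set21 _ _))).1.
  have [b hb] := vtx_surj (setIP (sC j (set22 _ _))).1.
  have ab : a != b by apply: contra ij => /eqP e; rewrite -ha -hb e.
  rewrite -ha -hb entry_vtx !mxE hNoff // NfE ha hb hF.
  by rewrite (hYoff a b ab) ?oppr0 ?addr0 // ha hb.
Qed.


Lemma entry_zero (R : realType) (T : finType) d (S : {set T}) (E : {set {set T}})
  (p : T -> 'rV[R]_d) (Om : 'M[R]_#|S|) i j :
  is_stress S E p Om -> [set i; j] \notin E -> i != j -> entry Om i j = 0.
Proof.
move=> [_ hoff _ _] hn ij.
case: (boolP ((i \in S) && (j \in S))) => [/andP [hi hj]|h]; last first.
  by apply: entry_out; rewrite -negb_and.
have [a ha] := vtx_surj hi; have [b hb] := vtx_surj hj.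
rewrite -ha -hb entry_vtx hoff //; last by rewrite ha hb.
by apply: contra ij => /eqP e; rewrite -ha -hb e.
Qed.

Lemma qf_split (R : realType) n (a : R) (A B : 'M[R]_n) (u : 'rV[R]_n) :
  (u *m (a *: A + B) *m u^T) 0 0 = a * (u *m A *m u^T) 0 0 + (u *m B *m u^T) 0 0.
Proof. by rewrite mulmxDr mulmxDl -scalemxAr -scalemxAl [LHS]mxE mxE. Qed.

Lemma qf_add (R : realType) n (A B : 'M[R]_n) (u : 'rV[R]_n) :
  (u *m (A + B) *m u^T) 0 0 = (u *m A *m u^T) 0 0 + (u *m B *m u^T) 0 0.
Proof. by rewrite -[A]scale1r qf_split mul1r scale1r. Qed.

Lemma qf_J (R : realType) n m (J : 'M[R]_(n, m)) (M : 'M[R]_n) (v : 'rV[R]_m) :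
  v *m (J^T *m M *m J) *m v^T = (v *m J^T) *m M *m (v *m J^T)^T.
Proof. by rewrite trmx_mul trmxK !mulmxA. Qed.

Lemma yZ_entry (R : realType) (T : finType) d (S : {set T}) (q : T -> 'rV[R]_d)
  (y : 'rV[R]_(d + 1)) a :
  (y *m (Zm S q)^T) 0 a = (row_mx (q (vtx a)) (1 : 'rV[R]_1) *m y^T) 0 0.
Proof.
rewrite -row_Zm -row_mul -[y *m _]trmxK trmx_mul trmxK mxE [RHS]mxE.
by [].
Qed.

Lemma SelJ (R : realType) (T : finType) (S U : {set T}) m (f : 'I_m -> T) :
  (forall k, f k \in S) -> Sel R S f *m Jm R S U = Sel R U f.
Proof.
move=> fS; apply/row_matrixP => k.
have [b hb] := vtx_surj (fS k).
rewrite (Sel_row _ hb); apply/rowP => j; by rewrite !mxE hb.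
Qed.

Theorem theorem7 (R : realType) (T : finType) (d : nat)
  (VA VB : {set T}) (EA EB : {set {set T}}) (pA pB : T -> 'rV[R]_d)
  (OmA : 'M[R]_#|VA|) (OmB : 'M[R]_#|VB|) :
  (1 <= d)%N ->
  is_graph VA EA -> is_graph VB EB ->
  general_position VA pA -> general_position VB pB ->
  VA :&: VB \proper VA -> VA :&: VB \proper VB ->
  (d.+1 <= #|VA :&: VB|)%N ->
  (forall i, i \in VA :&: VB -> pA i = pB i) ->
  is_stress VA EA pA OmA -> psd OmA -> nullity OmA = d.+1 ->
  is_stress VB EB pB OmB -> psd OmB -> nullity OmB = d.+1 ->
  inf_rigid VA EA pA ->
  let F := [set e in EB :\: EA | e \subset VA :&: VB] in
  let p := fun i => if i \in VA then pA i else pB i in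
  exists OmAK : 'M[R]_#|VA|,
    [/\ OmAK^T = OmAK,
        is_stress VA (EA :|: F) pA OmAK,
        (forall i j, [set i; j] \in F -> i != j ->
           entry OmAK i j = - entry OmB i j) &
        exists c0 : R, 0 < c0 /\ forall c : R, c0 <= c ->
          let Omre : 'M[R]_#|VA :|: VB| :=
            c *: ext (VA :|: VB) OmA + ext (VA :|: VB) OmAK + ext (VA :|: VB) OmB in
          [/\ is_stress (VA :|: VB) ((EA :|: EB) :\: F) p Omre,
              psd Omre & nullity Omre = d.+1]].
Proof.
move=> hd gA gB gpA gpB prA prB hC hpAB sA psA nA sB psB nB rig F p.
have [symA offA sumA posA] := sA.
have [symB offB sumB posB] := sB.
pose f : 'I_d.+1 -> T := fun k => @vtx T (VA :&: VB) (widen_ord hC k).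
have fi : injective f by move=> k1 k2 /vtx_inj /(congr1 val) /= /val_inj.
have fA k : f k \in VA by have := vtx_in (widen_ord hC k); rewrite inE => /andP [].
have fB k : f k \in VB by have := vtx_in (widen_ord hC k); rewrite inE => /andP [].
have zA : OmA *m Zm VA pA = 0 := stress_Z sumA posA.
have zB : OmB *m Zm VB pB = 0 := stress_Z sumB posB.
have rA : \rank (Zm VA pA) = d.+1 := rank_Zm fi fA gpA.
have rB : \rank (Zm VB pB) = d.+1 := rank_Zm fi fB gpB.
have kA : (kermx OmA <= (Zm VA pA)^T)%MS := ker_Z symA zA nA rA.
have kB : (kermx OmB <= (Zm VB pB)^T)%MS := ker_Z symB zB nB rB.
have [OmAK [symK sK FK]] := exists_OmAK rig gA gB fi fA gpA symB.
have [_ offK sumK posK] := sK.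
have zK : OmAK *m Zm VA pA = 0 := stress_Z sumK posK.
have kAK : (kermx OmA <= kermx OmAK)%MS.
  apply: submx_trans kA _; apply/sub_kermxP.
  by rewrite -symK -trmx_mul zK trmx0.
have [c1 [c1p hc1]] := psd_pert symA symK psA kAK.
exists OmAK; split => //.
exists (c1 + 1); split; first lra.
move=> c hc Omre.
set U := VA :|: VB.
pose X := c *: OmA + OmAK.
have psX : psd X by apply: hc1; lra.
have symX : X^T = X by rewrite /X linearD /= linearZ /= symA symK.
have zX : X *m Zm VA pA = 0 by rewrite /X mulmxDl -scalemxAl zA zK scaler0 addr0.
have psY : psd (c1 *: OmA + OmAK) by apply: hc1.
have kX : (kermx X <= (Zm VA pA)^T)%MS.
  apply: submx_trans kA; apply/row_subP => i; set u := row i (kermx X).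
  have hu : u *m X = 0 by apply/sub_kermxP; exact: row_sub.
  apply/sub_kermxP; apply: (psd0 symA psA).
  have e : X = (c - c1) *: OmA + (c1 *: OmA + OmAK).
    by rewrite /X addrA -scalerDl subrK.
  have := qf_split (c - c1) OmA (c1 *: OmA + OmAK) u.
  rewrite -e hu mul0mx mxE.
  have := psA u; have := psY u.
  move: ((u *m OmA *m u^T) 0 0) ((u *m (c1 *: OmA + OmAK) *m u^T) 0 0) => qa qy hy ha.
  have hcc : 0 < c - c1 by lra.
  nra.
pose JA := Jm R VA U; pose JB := Jm R VB U.
have eOm : Omre = JA^T *m X *m JA + JB^T *m OmB *m JB.
  by rewrite /Omre !ext_J /X mulmxDr mulmxDl -scalemxAr -scalemxAl.
have pAe x : x \in VA -> p x = pA x by rewrite /p => ->.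
have pBe x : x \in VB -> p x = pB x.
  by rewrite /p => xB; case: ifP => // xA; apply: hpAB; rewrite inE xA xB.
have JZA : JA *m Zm U p = Zm VA pA by apply: JZ; [exact: subsetUl | exact: pAe].
have JZB : JB *m Zm U p = Zm VB pB by apply: JZ; [exact: subsetUr | exact: pBe].
have zU : Omre *m Zm U p = 0.
  rewrite eOm mulmxDl -!mulmxA JZA JZB !mulmxA.
  by rewrite -(mulmxA _ X) zX -(mulmxA _ OmB) zB !mulmx0 addr0.
have symU : Omre^T = Omre.
  by rewrite eOm linearD /= !trmx_mul !trmxK symX symB !mulmxA.
have [sU1 sU2] := Z_stress zU.
have offU : forall a b : 'I_#|U|, a != b ->
    [set vtx a; vtx b] \notin (EA :|: EB) :\: F -> Omre a b = 0.
  move=> a b ab hn.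
  have vab : vtx a != vtx b by apply: contra ab => /eqP /vtx_inj ->.
  rewrite /Omre !mxE.
  case: (boolP ([set vtx a; vtx b] \in F)) => hF.
    have nEA : [set vtx a; vtx b] \notin EA.
      by move: hF; rewrite /F !inE => /andP [/andP [] ].
    by rewrite (entry_zero sA nEA vab) FK // mulr0 add0r addNr.
  have nE : [set vtx a; vtx b] \notin EA :|: EB.
    by move: hn; rewrite in_setD hF.
  move: nE; rewrite inE negb_or => /andP [nEA nEB].
  have nK : [set vtx a; vtx b] \notin EA :|: F by rewrite inE negb_or nEA hF.
  by rewrite (entry_zero sA nEA vab) (entry_zero sK nK vab) (entry_zero sB nEB vab) mulr0 !addr0.
split; first by split.
  move=> v; rewrite eOm qf_add !qf_J; apply: addr_ge0; [exact: psX | exact: psB].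
have sZU : ((Zm U p)^T <= kermx Omre)%MS.
  by apply/sub_kermxP; rewrite -symU -trmx_mul zU trmx0.
have rU : \rank (Zm U p) = d.+1.
  apply/eqP; rewrite eqn_leq; apply/andP; split.
    by apply: leq_trans (rank_leq_col (Zm U p)) _; rewrite addn1.
  by rewrite -{1}rA -JZA mxrankM_maxr.
have kU : (kermx Omre <= (Zm U p)^T)%MS.
  apply/row_subP => i; set u := row i (kermx Omre).
  have hu : u *m Omre = 0 by apply/sub_kermxP; exact: row_sub.
  have h0 : (u *m Omre *m u^T) 0 0 = 0 by rewrite hu mul0mx mxE.
  rewrite eOm qf_add !qf_J in h0.
  set uA := u *m JA^T in h0; set uB := u *m JB^T in h0.
  have hA0 := psX uA; have hB0 := psB uB.
  have qA0 : (uA *m X *m uA^T) 0 0 = 0 by lra.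
  have qB0 : (uB *m OmB *m uB^T) 0 0 = 0 by lra.
  have uAX := psd0 symX psX qA0; have uBB := psd0 symB psB qB0.
  have : (uA <= (Zm VA pA)^T)%MS by apply: submx_trans kX; apply/sub_kermxP.
  case/submxP => yA hyA.
  have : (uB <= (Zm VB pB)^T)%MS by apply: submx_trans kB; apply/sub_kermxP.
  case/submxP => yB hyB.
  pose Q := \matrix_(k < d.+1) row_mx (pA (f k)) (1 : 'rV[R]_1).
  have QA : Sel R VA f *m Zm VA pA = Q := Sel_Zm pA fA.
  have QB : Sel R VB f *m Zm VB pB = Q.
    rewrite (Sel_Zm pB fB); apply/row_matrixP => k; by rewrite !rowK hpAB // inE fA fB.
  have eA : u *m (Sel R U f)^T = yA *m Q^T.
    by rewrite -(@SelJ R T VA U _ f fA) trmx_mul mulmxA -/uA hyA -mulmxA -trmx_mul QA.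
  have eB : u *m (Sel R U f)^T = yB *m Q^T.
    by rewrite -(@SelJ R T VB U _ f fB) trmx_mul mulmxA -/uB hyB -mulmxA -trmx_mul QB.
  have hy : yA = yB.
    have : (yA - yB) *m Q^T = 0 by rewrite mulmxBl -eA -eB subrr.
    move/(congr1 trmx); rewrite trmx_mul trmx0 trmxK => hQ.
    have [Q' hQ'] := row_fullP (Q_full (gpA f fi fA)).
    have : (yA - yB)^T = 0 by rewrite -[_^T]mul1mx -hQ' -mulmxA hQ mulmx0.
    by move/(congr1 trmx); rewrite trmxK trmx0 => /eqP; rewrite subr_eq0 => /eqP.
  apply/submxP; exists yA; apply/rowP => b.
  case: (boolP (vtx b \in VA)) => hbA.
    have [a ha] := vtx_surj hbA.
    have e1 : (u *m JA^T) 0 a = u 0 b := Sel_rowT u (esym ha).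
    by rewrite -e1 -/uA hyA !yZ_entry pAe // ha.
  have hbB : vtx b \in VB.
    by move: (vtx_in b); rewrite inE (negbTE hbA).
  have [a ha] := vtx_surj hbB.
  have e1 : (u *m JB^T) 0 a = u 0 b := Sel_rowT u (esym ha).
  by rewrite -e1 -/uB hyB -hy !yZ_entry pBe // ha.
rewrite /nullity; apply/eqP; rewrite eqn_leq.
have := mxrankS kU; have := mxrankS sZU; rewrite mxrank_tr rU => h1 h2.
by rewrite h1 h2.
Qed.
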